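(* Let $M=(E,\mathcal{L})$ be a matroid. Then its near finitarization $M^{\mathrm{nfin}}$ is a finitary matroid if and only if $M$ is nearly finitary.
   Context: Matroids (possibly infinite): $\emptyset$ independent; subsets of independent sets independent; if $B$ is maximal independent and $A$ non-maximal independent, then $A\cup\{b\}$ is independent for some $b\in B\setminus A$; for independent $A\subseteq X\subseteq E$ there is a maximal independent $S$ with $A\subseteq S\subseteq X$. Bases are maximal independent sets. The finitarization $M^{\mathrm{fin}}=(E,\mathcal{L}^{\mathrm{fin}})$ has $\mathcal{L}^{\mathrm{fin}}$ = sets all of whose finite subsets lie in $\mathcal{L}$. The near finitarization is $M^{\mathrm{nfin}}=(E,\mathcal{L}^{\mathrm{nfin}})$ with $\mathcal{L}^{\mathrm{nfin}}=\{F\in\mathcal{L}^{\mathrm{fin}}:\exists S\in\mathcal{L},\ S\subseteq F,\ |F\setminus S|<\infty\}$. A matroid is finitary if a set is independent iff all its finite subsets are independent. $M$ is nearly finitary if $F\setminus B$ is finite whenever a base $F$ of $M^{\mathrm{fin}}$ contains a base $B$ of $M$. *)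

(* Defs.v *)
From mathcomp Require Import all_boot.
From mathcomp Require Import boolp classical_sets cardinality.
Set Implicit Arguments. Unset Strict Implicit. Unset Printing Implicit Defensive.
Local Open Scope classical_set_scope.

(* The ground set of a matroid is the whole type [T]; an independence system
   is a family [L : set (set T)] of independent sets. *)

Definition maximal_in {T : Type} (L : set (set T)) (X S : set T) : Prop :=
  L S /\ S `<=` X /\ (forall S', L S' -> S `<=` S' -> S' `<=` X -> S' = S).

Definition is_base {T : Type} (L : set (set T)) (B : set T) : Prop :=
  maximal_in L setT B.

Definition is_matroid {T : Type} (L : set (set T)) : Prop :=
  [/\ L set0,
      (forall A B, L B -> A `<=` B -> L A),
      (forall A B, L A -> ~ is_base L A -> is_base L B ->
         exists b, B b /\ ~ A b /\ L (A `|` [set b]))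
    & (forall A X, L A -> A `<=` X -> exists S, A `<=` S /\ maximal_in L X S)].

Definition fin_indep {T : Type} (L : set (set T)) : set (set T) :=
  [set F | forall G, G `<=` F -> finite_set G -> L G].

Definition nfin_indep {T : Type} (L : set (set T)) : set (set T) :=
  [set F | fin_indep L F /\ exists S, L S /\ S `<=` F /\ finite_set (F `\` S)].

Definition finitary {T : Type} (L : set (set T)) : Prop :=
  forall F, L F <-> (forall G, G `<=` F -> finite_set G -> L G).

Definition nearly_finitary {T : Type} (L : set (set T)) : Prop :=
  forall F B, is_base (fin_indep L) F -> is_base L B -> B `<=` F ->
    finite_set (F `\` B).

(* Main.v *)
Require Import Defs.
From mathcomp Require Import all_boot.
From mathcomp Require Import boolp classical_sets cardinality.
Set Implicit Arguments. Unset Strict Implicit. Unset Printing Implicit Defensive.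
Local Open Scope classical_set_scope.

Lemma notmax_ext T (L : set (set T)) X A :
  (forall A B, L B -> A `<=` B -> L A) ->
  L A -> A `<=` X -> ~ maximal_in L X A ->
  exists z, X z /\ ~ A z /\ L (A `|` [set z]).
Proof.
move=> sub LA AX nm; apply: (contra_notP _ nm) => H.
split; [done|split; [done|]] => S' LS' AS' S'X.
apply/seteqP; split; last done.
move=> x S'x; apply: (contra_notP _ H) => nAx.
exists x; split; [exact: S'X|split; [done|]].
by apply: sub LS' _ => y [Ay|->]; [exact: AS'|].
Qed.

Lemma max_witness T (L : set (set T)) X A S z :
  L S -> A `<=` S -> S `<=` X -> S z -> ~ A z -> ~ maximal_in L X A.
Proof.
move=> LS AS SX Sz nAz [_ [_ H]].
by apply: nAz; rewrite -(H S LS AS SX).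
Qed.

Lemma base_eq T (L : set (set T)) B S : is_base L B -> L S -> B `<=` S -> S = B.
Proof. by move=> [_ [_ H]] LS BS; apply: H. Qed.

Lemma restr_I3 T (L : set (set T)) X A B :
  is_matroid L -> L A -> A `<=` X -> ~ maximal_in L X A -> maximal_in L X B ->
  exists b, B b /\ ~ A b /\ L (A `|` [set b]).
Proof.
move=> [L0 sub I3 IM] LA AX nmA mB.
have [LB [BX Bmax]] := mB.
have [z [Xz [nAz LAz]]] := notmax_ext sub LA AX nmA.
have [BM [BBM mBM]] := IM B setT LB (fun x _ => I).
have [LBM _] := mBM.
have [A2 [AA2 mA2]] := IM A (A `|` BM) LA (fun x Ax => or_introl Ax).
have [LA2 [A2s A2max]] := mA2.
have bA2 : is_base L A2.
  apply: contrapT => nb.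
  have [b [BMb [nA2b LA2b]]] := I3 A2 BM LA2 nb mBM.
  apply: nA2b; rewrite -(A2max _ LA2b); first by right.
    by move=> x Hx; left.
  by move=> x [/A2s|->]; [|right].
have [J [AzJ mJ]] := IM (A `|` [set z]) (A2 `|` [set z]) LAz
  (fun x => fun H => match H with or_introl Ax => or_introl (AA2 x Ax) | or_intror e => or_intror e end).
have [LJ [Js Jmax]] := mJ.
have bJ : is_base L J.
  apply: contrapT => nb.
  have [b [A2b [nJb LJb]]] := I3 J A2 LJ nb bA2.
  apply: nJb; rewrite -(Jmax _ LJb); first by right.
    by move=> x Hx; left.
  by move=> x [/Js|->]; [|left].
have Jz : J z by apply: AzJ; right.
pose Q := B `|` (J `\` X).
have QBM : Q `<=` BM.
  move=> x [/BBM //|[Jx nXx]].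
  case: (Js x Jx) => [A2x|xz]; last by move: nXx; rewrite xz.
  by case: (A2s x A2x) => // /AX.
have LQ : L Q by apply: (sub _ _ LBM) QBM.
have bQ : is_base L Q.
  apply: contrapT => nb.
  have [j [Jj [nQj LQj]]] := I3 Q J LQ nb bJ.
  have Xj : X j by apply: contrapT => nXj; apply: nQj; right.
  have nBj : ~ B j by move=> Bj; apply: nQj; left.
  apply: nBj; rewrite -(Bmax (B `|` [set j])); first by right.
  - by apply: (sub _ _ LQj) => x [Bx|->]; [left; left|right].
  - by move=> x Bx; left.
  - by move=> x [/BX|->].
pose R := J `\` [set z].
have LR : L R by apply: (sub _ _ LJ) => x [].
have nbR : ~ is_base L R.
  move=> bR; have := base_eq bR LJ (fun x => fun H => proj1 H).
  by move=> e; move: Jz; rewrite e => -[_ /(_ erefl)].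
have [b [Qb [nRb LRb]]] := I3 R Q LR nbR bQ.
have AR : A `<=` R.
  by move=> x Ax; split; [apply: AzJ; left|move=> /= e; apply: nAz; rewrite -e].
have Bb : B b.
  case: Qb => // -[Jb nXb]; exfalso; apply: nRb; split => // /= e.
  by apply: nXb; rewrite e.
exists b; split => //; split; first by move/AR.
by apply: (sub _ _ LRb) => x [/AR|->]; [left|right].
Qed.

Lemma fin_sub T (L : set (set T)) A B :
  fin_indep L B -> A `<=` B -> fin_indep L A.
Proof. by move=> FB AB G GA; apply: FB => x /GA /AB. Qed.

Lemma fin_indep_L T (L : set (set T)) G : fin_indep L G -> finite_set G -> L G.
Proof. by move=> FG; apply: FG. Qed.

Lemma maxfin_base T (L : set (set T)) F B :
  is_matroid L -> is_base (fin_indep L) F -> maximal_in L F B -> is_base L B.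
Proof.
move=> HM bF mB; have [L0 sub I3 IM] := HM.
have [LB [BF Bmax]] := mB.
have [FF [_ Fmax]] := bF.
apply: contrapT => nb.
have [B0 [_ bB0]] := IM B setT LB (fun x _ => I).
have [x [B0x [nBx LBx]]] := I3 B B0 LB nb bB0.
have nFx : ~ F x.
  move=> Fx; apply: nBx; rewrite -(Bmax _ LBx); first by right.
    by move=> y; left.
  by move=> y [/BF|->].
have nfFx : ~ fin_indep L (F `|` [set x]).
  move=> fFx; apply: nFx; rewrite -(Fmax _ fFx); first by right.
    by move=> y; left.
  by [].
have [G [GFx [finG nLG]]] : exists G, G `<=` F `|` [set x] /\ finite_set G /\ ~ L G.
  apply: contrapT => H; apply: nfFx => G GFx finG.
  by apply: contrapT => nLG; apply: H; exists G.
pose H := G `\` [set x].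
have HF : H `<=` F by move=> y [/GFx [//|e] /= ne].
have LH : L H by apply: FF => //; apply: finite_setD.
have [K [HK mK]] := IM H F LH HF.
have [LK [KF Kmax]] := mK.
have mK' : maximal_in L (F `|` [set x]) K.
  split => //; split; first by move=> y /KF; left.
  move=> S' LS' KS' S'F.
  have nS'x : ~ S' x.
    move=> S'x; apply: nLG; apply: (sub _ _ LS') => y Gy.
    case: (pselect (y = x)) => [->//|ne]; apply: KS'; apply: HK; split => //.
  apply: Kmax => // y S'y; case: (S'F y S'y) => // e.
  by move: S'y; rewrite e.
have nmB : ~ maximal_in L (F `|` [set x]) B.
  apply: (max_witness (S := B `|` [set x]) (z := x)) => //.
    by move=> y [/BF|->]; [left|right].
  by right.
have [k [Kk [nBk LBk]]] := restr_I3 HM LB (fun y By => or_introl (BF y By)) nmB mK'.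
apply: nBk; rewrite -(Bmax _ LBk); first by right.
  by move=> y; left.
by move=> y [/BF|->] //; apply: KF.
Qed.

Lemma not_fin T (L : set (set T)) F :
  ~ fin_indep L F -> exists G, G `<=` F /\ finite_set G /\ ~ L G.
Proof.
move=> nf; apply: contrapT => H; apply: nf => G GF finG.
by apply: contrapT => nLG; apply: H; exists G.
Qed.

Lemma fin_I3 T (L : set (set T)) A B :
  is_matroid L -> fin_indep L A -> ~ is_base (fin_indep L) A ->
  is_base (fin_indep L) B ->
  exists b, B b /\ ~ A b /\ fin_indep L (A `|` [set b]).
Proof.
move=> HM fA nbA bB; have [L0 sub I3 IM] := HM.
have fB := bB.1.
apply: contrapT => Hn.
have H b : B b -> ~ A b -> ~ fin_indep L (A `|` [set b]).
  by move=> Bb nAb f; apply: Hn; exists b.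
have [z [_ [nAz fAz]]] := notmax_ext (fun A B fB AB => fin_sub fB AB) fA
  (fun x _ => I) nbA.
have nBz : ~ B z by move=> Bz; exact: (H z Bz nAz fAz).
have nfBz : ~ fin_indep L (B `|` [set z]).
  move=> f; apply: nBz; rewrite -(base_eq bB f); first by right.
  by move=> y; left.
have [G [GBz [finG nLG]]] := not_fin nfBz.
have Gz : G z.
  apply: contrapT => nGz; apply: nLG; apply: fB => // y Gy.
  by case: (GBz y Gy) => // e; move: Gy; rewrite e.
have : forall b, exists C, finite_set C /\
   (B b -> ~ A b -> C `<=` A `|` [set b] /\ ~ L C).
  move=> b; case: (pselect (B b /\ ~ A b)) => [[Bb nAb]|nb].
    have [C [CAb [finC nLC]]] := not_fin (H b Bb nAb).
    by exists C.
  exists set0; split; first exact: finite_set0.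
  by move=> Bb nAb; exfalso; apply: nb.
move=> /choice [Cf HC].
pose A0 := A `&` (G `|` \bigcup_(b in G) Cf b).
have finA0 : finite_set A0.
  apply: finite_setIr; rewrite finite_setU; split => //.
  by apply: bigcup_finite => // b _; exact: (HC b).1.
have A0A : A0 `<=` A by move=> y [].
have LA0 : L A0 by apply: fA.
have LA0z : L (A0 `|` [set z]).
  apply: fAz; first by move=> y [/A0A|->]; [left|right].
  by rewrite finite_setU; split => //; exact: finite_set1.
pose H' := G `\` [set z].
have H'B : H' `<=` B by move=> y [/GBz [//|e] ne].
have LH' : L H' by apply: fB => //; apply: finite_setD.
have [K [H'K mK]] := IM H' (A0 `|` G) LH' (fun y Hy => or_intror Hy.1).
have nmA0 : ~ maximal_in L (A0 `|` G) A0.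
  apply: (max_witness (S := A0 `|` [set z]) (z := z)) => //.
  - by move=> y [|->]; [left|right].
  - by right.
  - by move/A0A.
have [k [Kk [nA0k LA0k]]] := restr_I3 HM LA0 (fun y Hy => or_introl Hy) nmA0 mK.
have Gk : G k by case: (mK.2.1 k Kk).
have kz : k <> z.
  move=> e; apply: nLG; apply: (sub _ _ mK.1) => y Gy.
  case: (pselect (y = z)) => [->|ne]; first by rewrite -e.
  by apply: H'K; split.
have nAk : ~ A k by move=> Ak; apply: nA0k; split => //; left.
have Bk : B k by case: (GBz k Gk).
have [CA nLC] := (HC k).2 Bk nAk.
apply: nLC; apply: (sub _ _ LA0k) => y Cy.
case: (CA y Cy) => [Ay|->]; last by right.
by left; split => //; right; exists k.
Qed.

Fixpoint lin T (x : T) (l : list T) : Prop :=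
  match l with nil => False | a :: l => a = x \/ lin x l end.

Lemma finite_list T (G : set T) : finite_set G ->
  exists l : list T, forall x, G x -> lin x l.
Proof.
elim/Pchoice: T => T in G *.
move=> /finite_seqP [s ->]; exists s => x /=.
elim: s => [//|a s IH] /=; by rewrite inE => /orP [/eqP ->|/IH]; [left|right].
Qed.

Lemma chain_cover T (A : set T) (F : set (set T)) :
  total_on F subset -> forall l : list T,
  exists S, (S = set0 \/ F S) /\
    forall x, lin x l -> (A `|` \bigcup_(X in F) X) x -> (A `|` S) x.
Proof.
move=> tot; elim => [|a l IH].
  by exists set0; split; [left|].
have [S [HS HSl]] := IH.
case: (pselect ((A `|` \bigcup_(X in F) X) a)) => [Ha|nHa]; last first.
  exists S; split => // x [<-|/HSl //] //.
case: Ha => [Aa|[Y FY Ya]].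
  by exists S; split => // x [<-|/HSl]; [left|].
case: HS => [S0|FS].
  exists Y; split; first by right.
  move=> x [<-|/HSl H /H]; first by right.
  by rewrite S0 => -[|//]; left.
case: (tot S Y FS FY) => [SY|YS].
  exists Y; split; first by right.
  by move=> x [<-|/HSl H /H [|/SY]]; [right|left|right].
exists S; split; first by right.
by move=> x [<-|/HSl //]; right; apply: YS.
Qed.

Lemma fin_IM T (L : set (set T)) A X :
  fin_indep L A -> A `<=` X ->
  exists S, A `<=` S /\ maximal_in (fin_indep L) X S.
Proof.
move=> fA AX.
pose P := [set S | S `<=` X /\ fin_indep L (A `|` S)].
have ZP : forall F, F `<=` P -> total_on F subset -> P (\bigcup_(X in F) X).
  move=> F FP tot; split.
    by move=> x [Y FY Yx]; apply: (FP Y FY).1.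
  move=> G GU finG.
  have [l Hl] := finite_list finG.
  have [S [HS HSl]] := chain_cover A tot l.
  have GAS : G `<=` A `|` S by move=> x Gx; apply: HSl; [exact: Hl|exact: GU].
  case: HS => [S0|FS].
    apply: fA => // x /GAS; rewrite S0 => -[|//]. by [].
  by apply: (FP S FS).2.
have [S0 [[S0X fS0] S0max]] := Zorn_bigcup ZP.
exists (A `|` S0); split; first by move=> x; left.
split => //; split; first by move=> x [/AX|/S0X].
move=> S' fS' AS0S' S'X.
have PS' : P S'.
  by split => //; apply: (fin_sub fS') => x [Ax|//]; apply: (AS0S' x); left.
have S0S' : S0 `<=` S' by move=> x S0x; apply: AS0S'; right.
have S'S0 : S' `<=` S0.
  apply: contrapT => nS; apply: (S0max S') => //; split => //.
by apply/seteqP; split => // x /S'S0 H; right.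
Qed.

Lemma fd T (L : set (set T)) : is_matroid L -> forall l B S,
  is_base L B -> L S -> (forall x, B x -> ~ S x -> lin x l) ->
  finite_set (S `\` B).
Proof.
move=> HM; have [L0 sub I3 IM] := HM.
elim => [|a l IH] B S bB LS Hl.
  have BS : B `<=` S by move=> x Bx; apply: contrapT => nSx; exact: (Hl x Bx nSx).
  have e := base_eq bB LS BS.
  by apply: (sub_finite_set _ (finite_set0 T)) => x []; rewrite e.
have [S2 [SS2 bS2]] := IM S setT LS (fun x _ => I).
have LS2 := bS2.1.
apply: (sub_finite_set (B := S2 `\` B)); first by move=> x [/SS2].
case: (pselect (B a /\ ~ S2 a)) => [[Ba nS2a]|nBa]; last first.
  apply: IH => // x Bx nS2x.
  case: (Hl x Bx (fun Sx => nS2x (SS2 x Sx))) => // e.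
  by exfalso; apply: nBa; rewrite e.
have LBa : L (B `\` [set a]) by apply: (sub _ _ bB.1) => x [].
have nbBa : ~ is_base L (B `\` [set a]).
  move=> b; have := base_eq b bB.1 (fun x H => H.1).
  by move=> e; move: Ba; rewrite e => -[_]; apply.
have [s [S2s [nBas LB']]] := I3 _ _ LBa nbBa bS2.
have sa : s <> a by move=> e; apply: nS2a; rewrite -e.
have nBs : ~ B s by move=> Bs; apply: nBas; split.
pose B' := (B `\` [set a]) `|` [set s].
have bB' : is_base L B'.
  apply: contrapT => nb.
  have [b [Bb [nB'b LB'b]]] := I3 B' B LB' nb bB.
  have ba : b = a.
    apply: contrapT => ne; apply: nB'b; left; split => //.
  apply: nBs; rewrite -(base_eq bB (S := B `|` [set s])); first by right.
  - apply: (sub _ _ LB'b) => x [Bx|->]; last by left; right.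
    case: (pselect (x = a)) => [->|ne]; first by right.
    by left; left; split.
  - by move=> x Bx; left.
have fin' : finite_set (S2 `\` B').
  apply: IH => // x Bx nS2x.
  have xs : x <> s by move=> e; apply: nS2x; rewrite e.
  have [Bx0 xa] : B x /\ x <> a by case: Bx => // -[].
  case: (Hl x Bx0 (fun Sx => nS2x (SS2 x Sx))) => // e.
  by exfalso; apply: xa.
apply: (sub_finite_set (B := (S2 `\` B') `|` [set s])).
  move=> y [S2y nBy]; case: (pselect (y = s)) => [->|ne]; first by right.
  left; split => // -[[By _]|//].
  by apply: nBy.
by rewrite finite_setU; split => //; exact: finite_set1.
Qed.

Theorem theorem4p1p1 (T : Type) (L : set (set T)) :
  is_matroid L ->
  ((is_matroid (nfin_indep L) /\ finitary (nfin_indep L)) <-> nearly_finitary L).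
Proof.
move=> HM; have [L0 sub I3 IM] := HM; split.
  move=> [_ finit] F B bF bB BF.
  have fF := bF.1.
  have [_ [S [LS [SF finFS]]]] : nfin_indep L F.
    apply/(finit F) => G GF finG; split; first exact: fin_sub fF GF.
    exists G; split; first exact: fF.
    split => //; apply: (sub_finite_set _ (finite_set0 T)) => x [].
    by move=> Gx; apply.
  have [l Hl] := finite_list finFS.
  have finSB := fd HM bB LS (fun x Bx nSx => Hl x (conj (BF x Bx) nSx)).
  apply: (sub_finite_set (B := (F `\` S) `|` (S `\` B))).
    move=> x [Fx nBx]; case: (pselect (S x)) => Sx; [right|left]; by split.
  by rewrite finite_setU.
move=> NF.
have eqn : nfin_indep L = fin_indep L.
  apply/seteqP; split; first by move=> F [].
  move=> F fF; split => //.
  have [F' [FF' bF']] := fin_IM fF (fun x _ => I).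
  have [B [_ mB]] := IM set0 F' L0 (@sub0set T F').
  have bB := maxfin_base HM bF' mB.
  have finF'B := NF F' B bF' bB mB.2.1.
  exists (B `&` F); split; first by apply: (sub _ _ bB.1) => x [].
  split; first by move=> x [].
  apply: (sub_finite_set _ finF'B) => x [Fx nBFx]; split; first exact: FF'.
  by move=> Bx; apply: nBFx.
rewrite eqn; split.
  split.
  - by move=> G G0 _; apply: (sub _ _ L0) => x /G0.
  - by move=> A B fB AB; exact: fin_sub fB AB.
  - by move=> A B fA nbA bB; exact: fin_I3 HM fA nbA bB.
  - by move=> A X fA AX; exact: fin_IM fA AX.
move=> F; split.
  by move=> fF G GF finG; exact: fin_sub fF GF.
by move=> H G GF finG; exact: fin_indep_L (H G GF finG) finG.
Qed.
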